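(* For $n\geq 3$, there is no u-p-word for $n$-permutations containing exactly one occurrence of $\Diamond$.
   Context: An $n$-permutation is a permutation of $\{1,\ldots,n\}$. For a word $w$ of distinct numbers, $\mathrm{red}(w)$ is obtained by replacing the $i$-th smallest letter by $i$. Let $\Diamond$ be a symbol not among the integers. A word $f_1\cdots f_n$ over the positive integers together with $\Diamond$, whose integer letters are pairwise distinct, covers an $n$-permutation $\pi$ if one can substitute real numbers for the occurrences of $\Diamond$ (independently) so that the resulting word has $n$ pairwise distinct entries and reduces to $\pi$; equivalently, $f_i<f_j\iff\pi_i<\pi_j$ for all positions $i,j$ holding integers. A u-p-word for $n$-permutations is a word $u_1\cdots u_N$, $N\geq n$, over this alphabet containing at least one $\Diamond$, such that every factor $u_i\cdots u_{i+n-1}$ ($1\leq i\leq N-n+1$) has pairwise distinct integer letters and every $n$-permutation is covered by exactly one of these factors. *)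

(* Defs.v *)
From mathcomp Require Import all_boot all_fingroup.
Set Implicit Arguments. Unset Strict Implicit. Unset Printing Implicit Defensive.

(* Letters: [Some k] is the integer letter k, [None] is the symbol Diamond. *)
Definition letter := option nat.
Definition word := seq letter.

Definition factor (w : word) (n i : nat) : word := take n (drop i w).

Definition distinct_ints (f : word) : bool := uniq (pmap id f).

(* f (of length n) covers the n-permutation p: for all positions i, j holding
   integers, f_i < f_j <-> p_i < p_j.  (Permutations of 'I_n = {0..n-1}
   instead of {1..n}; only relative order matters.) *)
Definition covers (n : nat) (f : word) (p : 'S_n) : Prop :=
  forall (i j : 'I_n) (a b : nat),
    nth None f i = Some a -> nth None f j = Some b ->
    (a < b) = (p i < p j).

Definition is_upword (n : nat) (w : word) : Prop :=
  [/\ n <= size w,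
      None \in w,
      (forall k, Some k \in w -> 0 < k),
      (forall i, i <= size w - n -> distinct_ints (factor w n i))
    & (forall p : 'S_n, exists! i, i <= size w - n /\ covers (factor w n i) p)].

(* Main.v *)
Require Import Defs.
From mathcomp Require Import all_boot all_fingroup zify.
Set Implicit Arguments. Unset Strict Implicit. Unset Printing Implicit Defensive.

Section Perms.
Variable n' : nat.
Local Notation n := n'.+1.

Definition pf (p : 'S_n) (t : nat) : nat := p (inord t).

Lemma pf_lt (p : 'S_n) t : pf p t < n.
Proof. by rewrite /pf ltn_ord. Qed.

Lemma pf_inj (p : 'S_n) t u : t < n -> u < n -> pf p t = pf p u -> t = u.
Proof.
move=> ht hu; rewrite /pf => /val_inj /perm_inj /(congr1 val).
by rewrite /= !inordK.
Qed.

Lemma permP_pf (p q : 'S_n) : (forall t, t < n -> pf p t = pf q t) -> p = q.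
Proof.
move=> H; apply/permP => x; apply: val_inj => /=.
by have := H x (ltn_ord x); rewrite /pf inord_val.
Qed.

Lemma rank_pf (p : 'S_n) t : t < n ->
  pf p t = #|[pred s : 'I_n | pf p s < pf p t]|.
Proof.
move=> ht.
have -> : #|[pred s : 'I_n | pf p s < pf p t]| =
          #|p @^-1: [set x : 'I_n | x < pf p t]|.
  apply: eq_card => s; rewrite !inE /pf inord_val //.
rewrite card_preimset; last exact: perm_inj.
set k := pf p t.
have hk : k <= n by apply: ltnW; apply: pf_lt.
have -> : #|[set x : 'I_n | x < k]| = #|image (fun i : 'I_k => widen_ord hk i) 'I_k|.
  apply: eq_card => x; rewrite inE.
  apply/idP/imageP.
    by move=> xk; exists (Ordinal xk) => //; apply: val_inj.
  by case=> i _ ->; rewrite /= ltn_ord.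
rewrite card_image ?card_ord //.
by move=> i j /(congr1 val) /= /val_inj.
Qed.

Lemma pf_eq_pattern (p q : 'S_n) :
  (forall t u, t < n -> u < n -> (pf p t < pf p u) = (pf q t < pf q u)) -> p = q.
Proof.
move=> H; apply: permP_pf => t ht.
rewrite (rank_pf p ht) (rank_pf q ht); apply: eq_card => s.
by rewrite !inE H.
Qed.

Lemma pf_det (p q : 'S_n) j : j < n -> pf p j = pf q j ->
  (forall t u, t < n -> u < n -> t != j -> u != j ->
     (pf p t < pf p u) = (pf q t < pf q u)) -> p = q.
Proof.
move=> hj hpq H; apply: permP_pf => t ht.
case: (eqVneq t j) => [->//|tj].
pose K r := #|[pred s : 'I_n | (s != inord j :> 'I_n) && (pf r s < pf r t)]|.
have K' : K p = K q.
  apply: eq_card => s; rewrite !inE; case: (eqVneq s (inord j)) => //= sj.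
  have sj' : (s : nat) != j.
    by apply: contra_neq sj => e; apply: val_inj; rewrite /= inordK // e.
  by rewrite H.
have split1 : forall r : 'S_n, pf r t = (pf r j < pf r t) + K r.
  move=> r; rewrite {1}(rank_pf r ht) (cardD1 (inord j)) !inE /pf inordK //.
have Ep := split1 p; have Eq := split1 q.
rewrite K' hpq in Ep.
case: (ltnP (pf q j) (pf p t)) Ep => a Ep; case: (ltnP (pf q j) (pf q t)) Eq => b Eq.
- by rewrite Ep Eq.
- have e : pf q t = pf q j by lia.
  by move: (pf_inj ht hj e) => e'; rewrite e' eqxx in tj.
- have e : pf p t = pf q j by lia.
  rewrite -hpq in e.
  by move: (pf_inj ht hj e) => e'; rewrite e' eqxx in tj.
- by rewrite Ep Eq.
Qed.


Section Mk.
Variable v : nat -> nat.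
Hypothesis Hv : forall t u, t < n -> u < n -> v t = v u -> t = u.

Definition rkc (x : nat) := #|[pred s : 'I_n | v s < v x]|.

Lemma rkc_lt x : x < n -> rkc x < n.
Proof.
move=> hx; rewrite /rkc.
have H : [pred s : 'I_n | v s < v x] \proper 'I_n.
  apply/properP; split; first by apply/subsetP.
  by exists (Ordinal hx) => //; rewrite inE /= ltnn.
by have := proper_card H; rewrite card_ord.
Qed.

Lemma rkc_ltE x y : x < n -> y < n -> (rkc x < rkc y) = (v x < v y).
Proof.
move=> hx hy; case: (ltnP (v x) (v y)) => h.
  rewrite /rkc (cardD1 (Ordinal hx) [pred s : 'I_n | v s < v y]) inE /= h add1n ltnS.
  apply: subset_leq_card; apply/subsetP => s; rewrite !inE => hs.
  rewrite (ltn_trans hs h) andbT; apply/eqP => e; rewrite e /= ltnn in hs.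
  by [].
apply/negbTE; rewrite -leqNgt; apply: subset_leq_card; apply/subsetP => s.
by rewrite !inE => hs; apply: leq_trans hs h.
Qed.

Definition mkf (x : 'I_n) : 'I_n := inord (rkc x).

Lemma mkf_inj : injective mkf.
Proof.
move=> x y /(congr1 val); rewrite /mkf /= !inordK; try exact: (rkc_lt (ltn_ord _)).
move=> e.
have h1 := rkc_ltE (ltn_ord x) (ltn_ord y); have h2 := rkc_ltE (ltn_ord y) (ltn_ord x).
rewrite e ltnn in h1 h2.
apply: ord_inj; apply: (Hv (ltn_ord x) (ltn_ord y)).
by move: h1 h2; case: (ltngtP (v x) (v y)).
Qed.

Definition mkp : 'S_n := perm mkf_inj.

Lemma mkp_pf t : t < n -> pf mkp t = rkc t.
Proof.
move=> ht; rewrite /pf permE /mkf /= inordK; first by rewrite inordK.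
by rewrite inordK //; apply: rkc_lt.
Qed.

Lemma mkp_lt t u : t < n -> u < n -> (pf mkp t < pf mkp u) = (v t < v u).
Proof. by move=> ht hu; rewrite !mkp_pf // rkc_ltE. Qed.
End Mk.

End Perms.

Lemma nth_factor (w : word) n i t : t < n -> nth None (factor w n i) t = nth None w (i + t).
Proof. by move=> ht; rewrite /factor nth_take // nth_drop. Qed.

Lemma pmap_rev (f : word) : pmap id (rev f) = rev (pmap id f).
Proof.
elim: f => //= x f IH; rewrite rev_cons -cats1 pmap_cat IH /=.
by case: x => [a|] /=; rewrite ?rev_cons ?cats1 ?cats0.
Qed.

Lemma uniq_pos (f : word) t u a : uniq (pmap id f) -> t < size f -> u < size f ->
  nth None f t = Some a -> nth None f u = Some a -> t = u.
Proof.
elim: f t u => [|x f IH] t u //.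
case: t => [|t]; case: u => [|u] //=.
- move=> hU _ hu hx hu'; rewrite hx /= in hU; case/andP: hU => nin _.
  by move: nin; rewrite mem_pmap map_id -hu' mem_nth.
- move=> hU ht _ ht' hx; rewrite hx /= in hU; case/andP: hU => nin _.
  by move: nin; rewrite mem_pmap map_id -ht' mem_nth.
- move=> hU ht hu hnt hnu; congr S; apply: (IH t u) => //.
  by case: x hU => [b|] //= /andP [].
Qed.

Section Cov.
Variable n' : nat.
Local Notation n := n'.+1.

Lemma covers_nat (f : word) (p : 'S_n) :
  covers f p <-> (forall t u a b, t < n -> u < n -> nth None f t = Some a ->
                      nth None f u = Some b -> (a < b) = (pf p t < pf p u)).
Proof.
split.
- move=> H t u a b ht hu ha hb.
  have := H (inord t) (inord u) a b; rewrite !inordK //; apply => //.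
- move=> H i j a b ha hb; have := H i j a b (ltn_ord i) (ltn_ord j) ha hb.
  by rewrite /pf !inord_val.
Qed.

Definition coversb (f : word) (p : 'S_n) : bool :=
  [forall i : 'I_n, forall j : 'I_n,
     match nth None f i, nth None f j with
     | Some a, Some b => (a < b) == (p i < p j)
     | _, _ => true end].

Lemma coversP f p : reflect (covers f p) (coversb f p).
Proof.
apply: (iffP forallP) => H.
- move=> i j a b ha hb; have := forallP (H i) j; rewrite ha hb.
  by move/eqP.
- move=> i; apply/forallP => j.
  case ha: (nth None f i) => [a|] //; case hb: (nth None f j) => [b|] //.
  by rewrite (H i j a b ha hb).
Qed.

Lemma chain (g : nat -> nat) m b :
  (forall t u, t < m -> u < m -> g t = g u -> t = u) ->
  (forall k, k.+1 < m -> (g k < g k.+1) = b) ->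
  forall t u, t < u -> u < m -> (g t < g u) = b.
Proof.
move=> Hi Hc t u tu; elim: u tu => [//|u IH]; rewrite ltnS leq_eqVlt.
case/orP => [/eqP <- hm|tu hm]; first exact: Hc.
have IH' := IH tu (ltnW hm); have c := Hc u hm.
have nu : g u != g u.+1 by apply/eqP => e; have := Hi _ _ (ltnW hm) hm e; lia.
have nt : g t != g u by apply/eqP => e; have := Hi _ _ (ltn_trans tu (ltnW hm)) (ltnW hm) e; lia.
clear IH; move: IH' c nu nt; case: b Hc => Hc h1 h2 nu nt.
  exact: ltn_trans h1 h2.
have := negbT h1; have := negbT h2; rewrite -!leqNgt => h3 h4.
apply/negbTE; rewrite -leqNgt; lia.
Qed.

Lemma pf_neq (p : 'S_n) t u : t < n -> u < n -> t != u -> (pf p t < pf p u) = ~~ (pf p u < pf p t).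
Proof.
move=> ht hu tu; case: (ltngtP (pf p t) (pf p u)) => // e.
by move: (pf_inj ht hu e) tu => ->; rewrite eqxx.
Qed.

Lemma pf_eq_pattern_lt (p q : 'S_n) :
  (forall t u, t < u -> u < n -> (pf p t < pf p u) = (pf q t < pf q u)) -> p = q.
Proof.
move=> H; apply: pf_eq_pattern => t u ht hu.
case: (ltngtP t u) => [tu|ut|->]; first exact: H.
  by rewrite pf_neq // ?(gtn_eqF ut) // [in RHS]pf_neq // ?(gtn_eqF ut) // H.
by rewrite !ltnn.
Qed.

End Cov.

Lemma one_none (w : word) t u : count_mem None w = 1 -> t < size w -> u < size w ->
  nth None w t = None -> nth None w u = None -> t = u.
Proof.
wlog tu : t u / t <= u.
  move=> H c ht hu h1 h2; case: (leqP t u) => tu; first exact: H.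
  by apply/esym; apply: H => //; apply: ltnW.
move=> c ht hu h1 h2; case: (ltngtP t u) tu => // tu _.
move: c; rewrite -(cat_take_drop u w) count_cat.
have A : None \in take u w.
  have : nth None (take u w) t \in take u w by apply: mem_nth; rewrite size_take hu.
  by rewrite nth_take // h1.
have B : None \in drop u w.
  have : nth None (drop u w) 0 \in drop u w by apply: mem_nth; rewrite size_drop subn_gt0.
  by rewrite nth_drop addn0 h2.
move: A B; rewrite -!has_pred1 !has_count; lia.
Qed.

Lemma fact_big k : 3 <= k -> k.+2 <= k`!.
Proof.
elim: k => [//|k IH] hk; case: (eqVneq k 2) => [->//|k2].
have hk3 : 3 <= k by lia.
rewrite factS; have := IH hk3; nia.
Qed.

Section Main.
Variable n' : nat.
Local Notation n := n'.+1.
Variable w : word.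
Hypothesis Hup : is_upword n w.
Variable d : nat.
Hypothesis Wd : nth None w d = None.
Hypothesis one : count_mem None w = 1.
Hypothesis dN : d < size w.

Local Notation N := (size w).
Local Notation M := (size w - n).
Local Notation W t := (nth None w t).

Lemma nN : n <= N. Proof. by case: Hup. Qed.

Lemma onlyd t : t < N -> W t = None -> t = d.
Proof. by move=> ht h; apply: (one_none one ht dN h Wd). Qed.

Lemma Wsome t : t < N -> t != d -> exists a, W t = Some a.
Proof.
move=> ht td; case h: (W t) => [a|]; first by exists a.
by move: (onlyd ht h) td => ->; rewrite eqxx.
Qed.

Lemma Uniq (p : 'S_n) : exists! i, i <= M /\ covers (factor w n i) p.
Proof. by case: Hup. Qed.

Lemma uniq_idx (p : 'S_n) i j : i <= M -> j <= M -> covers (factor w n i) p ->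
  covers (factor w n j) p -> i = j.
Proof.
move=> hi hj ci cj; have [k [_ Hk]] := Uniq p.
by rewrite -(Hk i) ?(Hk j).
Qed.

Lemma DI i t u a : i <= M -> t < n -> u < n -> W (i + t) = Some a -> W (i + u) = Some a -> t = u.
Proof.
move=> hi ht hu h1 h2; case: Hup => _ _ _ Hd _.
have := Hd i hi; rewrite /distinct_ints => U.
have sz : size (factor w n i) = n.
  rewrite /factor size_take size_drop; have hn := nN; case: (ltnP n (N - i)) => h; [done | ]. lia.
by apply: (uniq_pos (a:=a) U); rewrite ?sz ?nth_factor.
Qed.

Lemma pred_cov i (p : 'S_n) : 0 < i -> i <= M -> covers (factor w n i) p ->
  exists r : 'S_n, covers (factor w n i.-1) r /\
   forall t u, t < n' -> u < n' -> (pf r t.+1 < pf r u.+1) = (pf p t < pf p u).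
Proof.
move=> i0 iM /covers_nat cp.
have cpW : forall t u a b, t < n -> u < n -> W (i + t) = Some a -> W (i + u) = Some b ->
    (a < b) = (pf p t < pf p u).
  by move=> t u a b ht hu; have := cp t u a b ht hu; rewrite !nth_factor.
pose c := W i.-1.
pose P := fun u : 'I_n => (0 < u) && (match W (i.-1 + u), c with Some b, Some a => b < a | _, _ => false end).
pose m := \max_(u : 'I_n | P u) (pf p u.-1).+1.
pose v := fun t => if t is t'.+1 then (pf p t').*2.+1 else m.*2.
have Hv : forall t u, t < n -> u < n -> v t = v u -> t = u.
  move=> [|t] [|u] //= ht hu; try lia.
  move=> e; congr S; apply: (pf_inj (p:=p)); lia.
pose r := mkp Hv.
have hsuf : forall t u, t < n' -> u < n' -> (pf r t.+1 < pf r u.+1) = (pf p t < pf p u).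
  by move=> t u ht hu; rewrite /r !mkp_lt //=; lia.
exists r; split => //.
have Wi : forall u, W (i.-1 + u.+1) = W (i + u) by move=> u; congr nth; lia.
have key : forall a u b, c = Some a -> u < n' -> W (i + u) = Some b -> (m <= pf p u) = (a < b).
  move=> a u b ca hu hb.
  have ab : a != b.
    apply/eqP => e; have := DI (i := i.-1) (t := 0) (u := u.+1) (a := a); rewrite Wi hb -e.
    rewrite addn0; move/(_ _ _ _ ca erefl); lia.
  case: (ltngtP a b) ab => // hab _.
  + apply/bigmax_leqP => s /andP [s0]; rewrite ca.
    case hs: (W (i.-1 + s)) => [b'|] // hb'.
    have e : i.-1 + s = i + s.-1 by lia.
    rewrite e in hs.
    have hs1 : s.-1 < n by have := ltn_ord s; lia.
    rewrite -(cpW _ _ _ _ hs1 (ltnW hu) hs hb); exact: ltn_trans hb' hab.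
  + apply/negbTE; rewrite -ltnNge.
    have hu' : u.+1 < n by [].
    have Ps : P (Ordinal hu') by rewrite /P /= Wi hb ca.
    by have := @leq_bigmax_cond _ P (fun u : 'I_n => (pf p u.-1).+1) (Ordinal hu') Ps.
apply/covers_nat => t u a b ht hu; rewrite !nth_factor // => ha hb.
rewrite /r !mkp_lt //.
case: t ht ha => [|t] ht ha; case: u hu hb => [|u] hu hb /=.
- by rewrite ha in hb; case: hb => ->; rewrite !ltnn.
- rewrite addn0 in ha; rewrite Wi in hb; have := key a u b ha (ltnSE hu) hb.
  move=> <-; lia.
- rewrite addn0 in hb; rewrite Wi in ha; have := key b t a hb (ltnSE ht) ha.
  have ab : a != b.
    apply/eqP => e; rewrite e in ha.
    have := DI (i := i.-1) (t := 0) (u := t.+1) (a := b) (leq_trans (leq_pred i) iM) (isT : 0 < n) ht.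
    by rewrite addn0 Wi => /(_ hb ha).
  move=> e; case: (ltngtP a b) ab e => // hab _ e; lia.
- rewrite !Wi in ha hb; rewrite (cpW _ _ _ _ (ltnW ht) (ltnW hu) ha hb); lia.
Qed.


Lemma Wint i t : i <= M -> t < n -> i + t != d -> exists a, W (i + t) = Some a.
Proof.
move=> hi ht hd; apply: Wsome hd; have := nN; lia.
Qed.

Lemma counting : (forall i, i <= M -> i <= d <= i + n') -> n`! <= M.+1 * n.
Proof.
move=> Hall.
pose idx (p : 'S_n) : 'I_M.+1 := odflt ord0 [pick i : 'I_M.+1 | coversb (factor w n i) p].
have idxP : forall p : 'S_n, covers (factor w n (idx p)) p.
  move=> p; rewrite /idx; case: pickP => [i /coversP //|H].
  have [i [[hi ci] _]] := Uniq p.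
  have : i < M.+1 by [].
  move=> hi'; have := H (Ordinal hi'); move/coversP in ci; by rewrite ci.
pose F (p : 'S_n) : 'I_M.+1 * 'I_n := (idx p, p (inord (d - idx p))).
have Finj : injective F.
  move=> p q [e1 e2]; rewrite -e1 in e2.
  have cp := idxP p; have cq := idxP q; rewrite -e1 in cq.
  have hi : (idx p : nat) <= M by rewrite -ltnS ltn_ord.
  have hh := Hall _ hi; case/andP: hh => h1 h2.
  move: hi h1 h2 cp cq e2; set i := (idx p : nat) => hi h1 h2 cp cq e2.
  apply: (pf_det (j := d - i)); first by lia.
    by rewrite /pf e2.
  move=> t u ht hu tj uj.
  have tn : i + t != d by apply/eqP; lia.
  have un : i + u != d by apply/eqP; lia.
  have [a ha] := Wint hi ht tn; have [b hb] := Wint hi hu un.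
  move/covers_nat: cp => cp; move/covers_nat: cq => cq.
  by rewrite -(cp t u a b) ?nth_factor // -(cq t u a b) ?nth_factor.
have := @leq_card _ _ F Finj; rewrite card_Sn card_prod !card_ord.
by [].
Qed.

Section Sigma.
Hypothesis n3 : 2 <= n'.
Hypothesis hd : d + n <= N.

Lemma dM : d <= M. Proof. lia. Qed.

Definition xv s := odflt 0 (W (d.+1 + s)).

Lemma Wx s : s < n' -> W (d.+1 + s) = Some (xv s).
Proof.
move=> hs; rewrite /xv.
have h1 : d.+1 + s < N by lia.
have h2 : d.+1 + s != d by apply/eqP; lia.
by have [a ->] := Wsome h1 h2.
Qed.

Lemma xinj s s' : s < n' -> s' < n' -> xv s = xv s' -> s = s'.
Proof.
move=> hs hs' e.
have := DI (i := d) (t := s.+1) (u := s'.+1) (a := xv s) dM hs hs'.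
rewrite !addnS -!addSn Wx // Wx // e => /(_ erefl erefl); lia.
Qed.

Definition outp (p : 'S_n) := forall t u, t < n' -> u < n' -> (pf p t < pf p u) = (xv t < xv u).

Lemma covd_intro (p : 'S_n) :
  (forall t u, t < n' -> u < n' -> (pf p t.+1 < pf p u.+1) = (xv t < xv u)) -> covers (factor w n d) p.
Proof.
move=> H; apply/covers_nat => t u a b ht hu; rewrite !nth_factor //.
case: t ht => [|t] ht; first by rewrite addn0 Wd.
case: u hu => [|u] hu; first by rewrite addn0 Wd.
rewrite !addnS -!addSn Wx // Wx // => [[<-] [<-]]; by rewrite H.
Qed.

Lemma covd_elim (p : 'S_n) : covers (factor w n d) p ->
  forall t u, t < n' -> u < n' -> (pf p t.+1 < pf p u.+1) = (xv t < xv u).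
Proof.
move/covers_nat => H t u ht hu; rewrite (H t.+1 u.+1 (xv t) (xv u)) // nth_factor //.
  by rewrite addnS -addSn Wx.
by rewrite addnS -addSn Wx.
Qed.

Lemma OUT (p : 'S_n) i : i <= M -> covers (factor w n i) p -> outp p -> [\/ i = 0, i = d | i = d.+1].
Proof.
move=> hi ci op; case: i hi ci => [|i] hi ci; first by constructor 1.
have [r [cr hr]] := pred_cov (isT : 0 < i.+1) hi ci.
have : covers (factor w n d) r by apply: covd_intro => t u ht hu; rewrite hr // op.
move=> crd; have := uniq_idx (ltnW hi) dM cr crd => /= ->; by constructor 3.
Qed.


Definition zf s := if s < n' then (xv s).+1 else 0.
Definition vf s t := if t < n' then (xv t).*2.+1 else (zf s).*2.

Lemma Hvf s : forall t u, t < n -> u < n -> vf s t = vf s u -> t = u.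
Proof.
move=> t u ht hu; rewrite /vf.
case: (ltnP t n') => h1; case: (ltnP u n') => h2; try lia.
move=> e; apply: xinj => //; lia.
Qed.

Definition Pm s : 'S_n := mkp (@Hvf s).

Lemma Pm_lt s t u : t < n -> u < n -> (pf (Pm s) t < pf (Pm s) u) = (vf s t < vf s u).
Proof. exact: mkp_lt. Qed.

Lemma Pm_out s : outp (Pm s).
Proof.
move=> t u ht hu; rewrite Pm_lt ?(ltn_trans ht) ?(ltn_trans hu) // /vf ht hu; lia.
Qed.

Lemma Pm_inj s s' : s < n -> s' < n -> Pm s = Pm s' -> s = s'.
Proof.
move=> hs hs' e.
have zinj : zf s = zf s' -> s = s'.
  rewrite /zf; case: (ltnP s n') => h1; case: (ltnP s' n') => h2 //; try lia.
  by move=> [] /xinj; apply.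
suff : zf s = zf s' by move/zinj.
apply/eqP; apply/negP => /negP ne.
wlog lt : s s' hs hs' e zinj ne / zf s < zf s'.
  move=> H; case: (ltngtP (zf s) (zf s')) => h; first exact: (H s s').
    apply: (H s' s) => //; first by move=> /esym /zinj.
    by rewrite eq_sym.
  by rewrite h eqxx in ne.
have hs1 : s' < n'.
  case: (ltnP s' n') => // h; move: lt; rewrite /zf [s' < n']ltnNge h /=.
  by rewrite ltn0.
have A := Pm_lt s (ltn_trans hs1 (ltnSn _)) (ltnSn n').
have B := Pm_lt s' (ltn_trans hs1 (ltnSn _)) (ltnSn n').
rewrite e B /vf hs1 ltnn /zf hs1 in A.
move: A lt; rewrite /zf hs1; case: (ltnP s n') => h; lia.
Qed.

Definition Bn i := [set s : 'I_n | (i <= M) && coversb (factor w n i) (Pm s)].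

Lemma cover_all (s : 'I_n) : s \in Bn 0 :|: Bn d :|: Bn d.+1.
Proof.
have [i [[hi ci] _]] := Uniq (Pm s).
have := OUT hi ci (Pm_out s); rewrite !inE.
have cb : coversb (factor w n i) (Pm s) by apply/coversP.
by case=> e; subst i; rewrite hi cb ?orbT.
Qed.

Lemma card_bins : n <= #|Bn 0 :|: Bn d :|: Bn d.+1|.
Proof.
rewrite -{1}(card_ord n); apply: subset_leq_card; apply/subsetP => s _; exact: cover_all.
Qed.

Lemma cap_nd i : (d < i) || (i + n <= d) -> #|Bn i| <= 1.
Proof.
move=> hi; apply/card_le1_eqP => s s'; rewrite !inE => /andP [iM /coversP c1] /andP [_ /coversP c2].
apply: ord_inj; apply: (Pm_inj (ltn_ord s') (ltn_ord s)); apply/esym.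
apply: pf_eq_pattern => t u ht hu.
have tn : i + t != d by apply/eqP; lia.
have un : i + u != d by apply/eqP; lia.
have [a ha] := Wint iM ht tn; have [b hb] := Wint iM hu un.
move/covers_nat: c1 => c1; move/covers_nat: c2 => c2.
by rewrite -(c1 t u a b) ?nth_factor // -(c2 t u a b) ?nth_factor.
Qed.

Lemma mono_eq (p q : 'S_n) b :
  (forall k, k.+1 < n -> (pf p k < pf p k.+1) = b) ->
  (forall k, k.+1 < n -> (pf q k < pf q k.+1) = b) -> p = q.
Proof.
move=> Hp Hq; apply: pf_eq_pattern_lt => t u tu hu.
rewrite (chain (g := pf p) _ Hp) // ?(chain (g := pf q) _ Hq) //.
  by move=> ? ? ? ?; apply: pf_inj.
by move=> ? ? ? ?; apply: pf_inj.
Qed.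

Lemma Bd_mono s : s \in Bn d ->
  (forall k, k.+1 < n' -> (xv k < xv k.+1) = (xv 0 < xv 1)) /\
  (forall k, k.+1 < n -> (pf (Pm s) k < pf (Pm s) k.+1) = (xv 0 < xv 1)).
Proof.
rewrite inE => /andP [_ /coversP c].
have ce := covd_elim c; have op := Pm_out s.
set p := Pm s.
have step : forall k, k.+2 < n -> (pf p k.+1 < pf p k.+2) = (pf p k < pf p k.+1).
  move=> k hk; rewrite ce ?op //; lia.
have all : forall k, k.+1 < n -> (pf p k < pf p k.+1) = (pf p 0 < pf p 1).
  elim=> [//|k IH] hk; rewrite step // IH //; lia.
have e0 : (pf p 0 < pf p 1) = (xv 0 < xv 1) by rewrite op //; lia.
split; last by move=> k hk; rewrite all // e0.
move=> k hk; rewrite -op ?(ltn_trans (ltnSn k) hk) // all //; lia.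
Qed.

Lemma cap_d : #|Bn d| <= 1.
Proof.
apply/card_le1_eqP => s s' hs hs'.
have [_ h1] := Bd_mono hs; have [_ h2] := Bd_mono hs'.
apply: ord_inj; apply: (Pm_inj (ltn_ord s') (ltn_ord s)); exact: mono_eq h2 h1.
Qed.

Section Zero.
Hypothesis d1 : 0 < d.
Hypothesis dn : d < n'.

Definition gb (s : 'I_n) := pf (Pm s) d < pf (Pm s) n'.

Lemma g_inj : {in Bn 0 &, injective gb}.
Proof.
move=> s s'; rewrite !inE => /andP [M0 /coversP c1] /andP [_ /coversP c2] eg.
apply: ord_inj; apply: (Pm_inj (ltn_ord s) (ltn_ord s')).
apply: pf_eq_pattern_lt => t u tu hu.
case: (ltnP u n') => hu'.
  by rewrite !Pm_out //; lia.
have eu : u = n' by lia.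
subst u.
case: (eqVneq t d) => [->|td]; first exact: eg.
have tn : 0 + t != d by rewrite add0n.
have un : 0 + n' != d by apply/eqP; lia.
have [a ha] := Wint M0 (ltn_trans tu (ltnSn _)) tn; have [b hb] := Wint M0 (ltnSn n') un.
have ht' : t < n by lia.
have ha' : nth None (factor w n 0) t = Some a by rewrite nth_factor.
have hb' : nth None (factor w n 0) n' = Some b by rewrite nth_factor.
move/covers_nat: c1 => c1; move/covers_nat: c2 => c2.
by rewrite -(c1 t n' a b ht' (ltnSn n') ha' hb') -(c2 t n' a b ht' (ltnSn n') ha' hb').
Qed.

Lemma cap0_2 : #|Bn 0| <= 2.
Proof. by have := @leq_card_in _ _ gb _ g_inj; rewrite card_bool. Qed.

Lemma cap0_1 : 3 <= n' -> (exists s, s \in Bn d) -> #|Bn 0| <= 1.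
Proof.
move=> n4 [sm hsm].
have [mx mp] := Bd_mono hsm.
set b := xv 0 < xv 1 in mx mp.
have xch : forall t u, t < u -> u < n' -> (xv t < xv u) = b.
  apply: chain => //; exact: xinj.
suff gc : forall s, s \in Bn 0 -> gb s = (if d.+1 < n' then b else ~~ b).
  apply/card_le1_eqP => s s' hs hs'; apply: g_inj => //; by rewrite !gc.
move=> s hs; have hs0 := hs; move: hs; rewrite inE => /andP [M0 /coversP c].
move/covers_nat: c => c.
case: (ltnP d.+1 n') => hdn.
-
  have e1 : (pf (Pm s) d < pf (Pm s) d.+1) = b by rewrite Pm_out // mx.
  have tn : 0 + d.+1 != d by rewrite add0n; apply/eqP; lia.
  have un : 0 + n' != d by apply/eqP; lia.
  have W1 : W (0 + d.+1) = Some (xv 0) by rewrite add0n -(addn0 d.+1) Wx //; lia.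
  have W2 : W (0 + n') = Some (xv (n' - d.+1)).
    rewrite -Wx; last by lia.
    by congr nth; lia.
  have e2 : (pf (Pm s) d.+1 < pf (Pm s) n') = b.
    rewrite -(c d.+1 n' (xv 0) (xv (n' - d.+1))) ?nth_factor //; try lia.
    by apply: xch; lia.
  rewrite /gb; move: e1 e2; case: b {mx mp xch} => e1 e2.
    exact: ltn_trans e1 e2.
  move/negbT: e1; move/negbT: e2 => e2 e1; apply/negbTE; lia.
-
  have ed : d.+1 = n' by lia.
  suff : gb s != b by case: (gb s); case: (b).
  apply/negP => /eqP eg.
  have cons : forall k, k.+1 < n -> (pf (Pm s) k < pf (Pm s) k.+1) = b.
    move=> k hk; case: (ltnP k.+1 n') => hk'.
      by rewrite Pm_out ?mx //; lia.
    have ek : k = d by lia.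
    by subst k; rewrite ed; exact: eg.
  have e := mono_eq cons mp.
  have ess : s = sm := ord_inj (Pm_inj (ltn_ord s) (ltn_ord sm) e).
  rewrite ess in hs0.
  move: hs0 hsm; rewrite !inE => /andP [M0x /coversP c0] /andP [Md /coversP cd].
  have := uniq_idx M0x Md c0 cd; lia.
Qed.

End Zero.

Lemma overlap3 : n' = 2 -> 0 < d -> False.
Proof.
move=> e2 d1.
have hdm : d.-1 <= M by have := dM; lia.
have [a ha] : exists a, W d.-1 = Some a.
  by apply: Wsome; [lia | apply/eqP; lia].
have hb : W (d.+1) = Some (xv 0) by rewrite -Wx; [congr nth; lia | lia].
have hc : W (d.+2) = Some (xv 1) by rewrite -Wx; [congr nth; lia | lia].
set b := xv 0 in hb; set c := xv 1 in hc.
have ab : a != b.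
  apply/eqP => e; rewrite e in ha.
  have h2 : 2 < n by lia.
  have e3 : d.-1 + 2 = d.+1 by lia.
  have := DI (i := d.-1) (t := 0) (u := 2) (a := b) hdm (isT : 0 < n) h2.
  by rewrite addn0 e3 => /(_ ha hb).
have bc : b != c.
  apply/eqP => e; have h0 : 0 < n' by lia.
  have h1 : 1 < n' by lia.
  by have := xinj h0 h1 e.
pose v := fun t => match t with 0 => if a < b then 0 else 3 | 1 => if b < c then 1 else 4 | _ => 2 end.
have Hv : forall t u, t < n -> u < n -> v t = v u -> t = u.
  move=> [|[|[|t]]] [|[|[|u]]] //= ht hu; try lia; case: (a < b); case: (b < c); lia.
pose p := mkp Hv.
have c1 : covers (factor w n d.-1) p.
  apply/covers_nat => t u a' b' ht hu; rewrite !nth_factor // /p !mkp_lt //.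
  have e1 : d.-1 + 1 = d by lia.
  have e2' : d.-1 + 2 = d.+1 by lia.
  move: ht hu; case: t => [|[|[|t]]]; case: u => [|[|[|u]]] => ht hu; try lia;
   rewrite ?addn0 ?e1 ?e2' ?Wd ?ha ?hb //= => [[<-]] [<-]; try by rewrite !ltnn.
  - by case: ltnP.
  - by case: (ltngtP a b) ab.
have c2 : covers (factor w n d) p.
  apply/covers_nat => t u a' b' ht hu; rewrite !nth_factor // /p !mkp_lt //.
  have e1 : d + 1 = d.+1 by lia.
  have e2' : d + 2 = d.+2 by lia.
  move: ht hu; case: t => [|[|[|t]]]; case: u => [|[|[|u]]] => ht hu; try lia;
   rewrite ?addn0 ?e1 ?e2' ?Wd ?hb ?hc //= => [[<-]] [<-]; try by rewrite !ltnn.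
  - by case: ltnP.
  - by case: (ltngtP b c) bc.
have := uniq_idx hdm dM c1 c2; lia.
Qed.


Lemma D2 : d = n' -> d.+1 <= M -> forall s0, s0 \in Bn 0 -> False.
Proof.
move=> edn hdM s0; rewrite inE => /andP [M0 /coversP c0].
move/covers_nat: c0 => c0.
pose v := fun t => odflt 0 (W (d.+1 + t)).
have Wv : forall t, t < n -> W (d.+1 + t) = Some (v t).
  move=> t ht; rewrite /v.
  have h1 : d.+1 + t < N by have := nN; lia.
  have h2 : d.+1 + t != d by apply/eqP; lia.
  by have [a ->] := Wsome h1 h2.
have Hv : forall t u, t < n -> u < n -> v t = v u -> t = u.
  move=> t u ht hu e.
  by apply: (DI (i := d.+1) (a := v t) hdM ht hu); rewrite Wv // e.
pose q := mkp Hv.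
have c1 : covers (factor w n d.+1) q.
  apply/covers_nat => t u a b ht hu; rewrite !nth_factor // !Wv // => [[<-] [<-]].
  by rewrite /q mkp_lt.
have c2 : covers (factor w n 0) q.
  apply/covers_nat => t u a b ht hu; rewrite !nth_factor // !add0n => ha hb.
  have tn : t < n'.
    case: (ltnP t n') => // h; have et : t = d by lia.
    by rewrite et Wd in ha.
  have un : u < n'.
    case: (ltnP u n') => // h; have eu : u = d by lia.
    by rewrite eu Wd in hb.
  rewrite (c0 t u a b) ?nth_factor ?add0n // Pm_out // /q mkp_lt //.
have := uniq_idx M0 hdM c2 c1; lia.
Qed.

Lemma ML : False.
Proof.
have cb := card_bins.
have hcd := cap_d.
have hc1 := cap_nd (i := d.+1) (_ : (d < d.+1) || _); rewrite ltnSn in hc1.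
have {hc1} hc1 := hc1 isT.
have hU := cardsU.
case: (posnP d) => [d0|d1].
  rewrite d0 setUid in cb; rewrite d0 in hcd hc1.
  have := hU _ (Bn 0) (Bn 1); lia.
case: (eqVneq n' 2) => [e2|n2]; first exact: overlap3 e2 d1.
have n4 : 3 <= n' by lia.
have h1 := hU _ (Bn 0 :|: Bn d) (Bn d.+1).
have h2 := hU _ (Bn 0) (Bn d).
case: (ltnP d n') => dn.
  have c02 := cap0_2 d1 dn.
  case: (set_0Vmem (Bn d)) => [E|[sm hsm]].
    have z : #|Bn d| = 0 by rewrite E cards0.
    lia.
  have c01 := cap0_1 d1 dn n4 (ex_intro _ sm hsm); lia.
case: (eqVneq d n') => [edn|dn'].
  case: (leqP d.+1 M) => hdM.
    case: (set_0Vmem (Bn 0)) => [E|[s0 hs0]]; last exact: (D2 edn hdM hs0).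
    have z : #|Bn 0| = 0 by rewrite E cards0.
    lia.
  have hM : M = n' by have := dM; lia.
  have Hall : forall i, i <= M -> i <= d <= i + n'.
    move=> i hi; apply/andP; split; lia.
  have := counting Hall; rewrite hM factS.
  have := fact_big n4; nia.
have hh : (d < 0) || (0 + n <= d) by apply/orP; right; lia.
have c0 := cap_nd hh.
lia.
Qed.

End Sigma.

End Main.

Section Rev.
Variable n' : nat.
Local Notation n := n'.+1.

Definition revp (p : 'S_n) : 'S_n := perm (inj_comp (@perm_inj _ p) (@rev_ord_inj n)).

Lemma pf_revp (p : 'S_n) t : t < n -> pf (revp p) t = pf p (n' - t).
Proof.
move=> ht; rewrite /pf permE /=; congr (nat_of_ord (p _)).
by apply: ord_inj; rewrite /= !inordK //; lia.
Qed.

Lemma covers_rev (f : word) (p : 'S_n) : size f = n ->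
  covers (rev f) p <-> covers f (revp p).
Proof.
move=> sf.
have nr : forall t, t < n -> nth None (rev f) t = nth None f (n' - t).
  by move=> t ht; rewrite nth_rev ?sf //; congr nth; lia.
split => /covers_nat H; apply/covers_nat => t u a b ht hu ha hb.
- have et : n' - (n' - t) = t by lia.
  have eu : n' - (n' - u) = u by lia.
  have h1 : n' - t < n by lia.
  have h2 : n' - u < n by lia.
  rewrite !pf_revp //; apply: H => //; by rewrite nr // ?et ?eu.
- rewrite nr // in ha; rewrite nr // in hb.
  have et : n' - (n' - t) = t by lia.
  have eu : n' - (n' - u) = u by lia.
  have h1 : n' - t < n by lia.
  have h2 : n' - u < n by lia.
  by rewrite (H _ _ _ _ h1 h2 ha hb) !pf_revp // et eu.
Qed.

Lemma size_factor (w : word) i : n <= size w -> i <= size w - n -> size (factor w n i) = n.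
Proof. move=> hn hi; rewrite /factor size_take size_drop; case: (ltnP n (size w - i)) => h; lia. Qed.

Lemma factor_rev (w : word) i : n <= size w -> i <= size w - n ->
  factor (rev w) n i = rev (factor w n (size w - n - i)).
Proof.
move=> hn hi; rewrite /factor drop_rev take_rev size_take.
rewrite take_drop.
case: (ltnP (size w - i) (size w)) => h.
  congr rev; congr drop; [lia | congr take; lia].
congr rev; congr drop; [lia | congr take; lia].
Qed.

Lemma upword_rev (w : word) : is_upword n w -> is_upword n (rev w).
Proof.
case=> hn hN hpos hdist hU; split.
- by rewrite size_rev.
- by rewrite mem_rev.
- by move=> k; rewrite mem_rev; apply: hpos.
- move=> i; rewrite size_rev => hi; rewrite factor_rev // /distinct_ints pmap_rev rev_uniq.
  apply: hdist; lia.
- move=> p; have [i [[hi ci] Hi]] := hU (revp p).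
  exists (size w - n - i); split.
    split; first by rewrite size_rev; lia.
    rewrite factor_rev ?size_rev; try lia.
    rewrite (_ : size w - n - (size w - n - i) = i); last lia.
    by apply/covers_rev; rewrite ?size_factor.
  move=> j [hj cj]; rewrite size_rev in hj.
  rewrite factor_rev // in cj.
  have hj' : size w - n - j <= size w - n by lia.
  move/covers_rev: cj => /(_ (size_factor hn hj')) cj.
  have := Hi _ (conj hj' cj); lia.
Qed.
End Rev.

Lemma first_none (w : word) : count_mem None w = 1 -> exists d, d < size w /\ nth None w d = None.
Proof.
move=> c; have : None \in w by rewrite -has_pred1 has_count c.
move=> hin; exists (index None w); split; first by rewrite index_mem.
by rewrite nth_index.
Qed.

Theorem corollary4 (n : nat) (w : word) :
  3 <= n -> is_upword n w -> count_mem None w <> 1.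
Proof.
case: n => [//|n'] h3 Hup c.
have n3 : 2 <= n' by lia.
have [d [dN Wd]] := first_none c.
case: (leqP (d + n'.+1) (size w)) => hd.
  exact (ML Hup Wd c dN n3 hd).
case: (leqP n' d) => hd2.
  have Hup' := upword_rev Hup.
  have c' : count_mem None (rev w) = 1 by rewrite count_rev.
  have dN' : size w - d.+1 < size (rev w) by rewrite size_rev; lia.
  have Wd' : nth None (rev w) (size w - d.+1) = None.
    rewrite nth_rev; last by rewrite size_rev in dN'.
    rewrite (_ : size w - (size w - d.+1).+1 = d) //; lia.
  have hd' : size w - d.+1 + n'.+1 <= size (rev w) by rewrite size_rev; lia.
  exact (ML Hup' Wd' c' dN' n3 hd').
have Hall : forall i, i <= size w - n'.+1 -> i <= d <= i + n'.
  move=> i hi; apply/andP; split; lia.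
have := counting Hup Wd c dN Hall; rewrite factS.
have : n' <= n'`!.
  case: n' {h3 n3 Hup hd hd2 Hall c dN Wd} => // k; rewrite factS; have := fact_gt0 k; nia.
nia.
Qed.
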